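(* Let $1\le p\le2$, $A\in\mathbb{R}^{m\times n}$, let $\bar{x}\in\mathbb{R}^n$ have exactly $S\ge1$ nonzero groups, $b:=A\bar{x}$, and suppose the $(p,1/2)$-GREC$(S,S)$ holds. Let $\lambda>0$ and let $x^*$ be a global minimizer of $\|Ax-b\|_2^2+\lambda\|x\|_{p,1/2}^{1/2}$. Then $\|x^*-\bar{x}\|_2^2\le 2\lambda^{4/3}S/\phi_{p,1/2}^{8/3}(S,S)$; in particular $\|x^*-\bar{x}\|_2^2=O(\lambda^{4/3}S)$.
   Context: Group structure: $\{1,\dots,n\}$ is partitioned into disjoint nonempty index sets $\mathcal{G}_1,\dots,\mathcal{G}_r$; $x_{\mathcal{G}_i}$ is the subvector indexed by $\mathcal{G}_i$. For $\mathcal{J}\subseteq\{1,\dots,r\}$, $\|x_{\mathcal{G}_{\mathcal{J}}}\|_{p,q}:=(\sum_{i\in\mathcal{J}}\|x_{\mathcal{G}_i}\|_p^q)^{1/q}$ and $\|x\|_{p,q}:=\|x_{\mathcal{G}_{\{1,\dots,r\}}}\|_{p,q}$. For $\mathcal{J}\subseteq\{1,\dots,r\}$ and integer $N$, $\mathcal{J}(x;N)$ is the set of the $N$ indices $i\in\mathcal{J}^c$ with the largest $\|x_{\mathcal{G}_i}\|_p$ (ties broken arbitrarily). $\phi_{p,q}(S,N):=\inf\{\|Ax\|_2/\|x_{\mathcal{G}_{\mathcal{N}}}\|_{p,2}: x\ne0,\ |\mathcal{J}|\le S,\ \|x_{\mathcal{G}_{\mathcal{J}^c}}\|_{p,q}\le\|x_{\mathcal{G}_{\mathcal{J}}}\|_{p,q},\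 \mathcal{N}=\mathcal{J}(x;N)\cup\mathcal{J}\}$; the $(p,q)$-GREC$(S,N)$ holds if $\phi_{p,q}(S,N)>0$. *)

(* Defs.v *)
From Stdlib Require Import Reals List Arith.
Import ListNotations.
Open Scope R_scope.

(* x^y for x >= 0, y > 0, with the convention 0^y = 0 (Stdlib's Rpower 0 y = 1). *)
Definition rpow (x y : R) : R := if Rlt_dec 0 x then Rpower x y else 0.

Definition rsum (l : list nat) (f : nat -> R) : R :=
  fold_right (fun i acc => f i + acc) 0 l.

(* Group structure: coordinate j (< n) belongs to group G_(g j), groups indexed 0..r-1.
   This encodes a partition of {0..n-1} into r disjoint nonempty sets. *)
Definition is_group_partition (n r : nat) (g : nat -> nat) : Prop :=
  (forall j, (j < n)%nat -> (g j < r)%nat) /\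
  (forall i, (i < r)%nat -> exists j, (j < n)%nat /\ g j = i).

Definition gnorm (p : R) (n : nat) (g : nat -> nat) (x : nat -> R) (i : nat) : R :=
  rpow (rsum (filter (fun j => Nat.eqb (g j) i) (seq 0 n))
             (fun j => rpow (Rabs (x j)) p)) (/ p).

Definition gpq (p q : R) (n : nat) (g : nat -> nat) (x : nat -> R) (J : list nat) : R :=
  rpow (rsum J (fun i => rpow (gnorm p n g x i) q)) (/ q).

Definition gpq_full (p q : R) (n r : nat) (g : nat -> nat) (x : nat -> R) : R :=
  gpq p q n g x (seq 0 r).

Definition compl (r : nat) (J : list nat) : list nat :=
  filter (fun i => negb (existsb (Nat.eqb i) J)) (seq 0 r).

Definition is_topN (p : R) (n r : nat) (g : nat -> nat) (x : nat -> R)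
    (J : list nat) (N : nat) (T : list nat) : Prop :=
  NoDup T /\ incl T (compl r J) /\ length T = Nat.min N (length (compl r J)) /\
  (forall i k, In i T -> In k (compl r J) -> ~ In k T ->
     gnorm p n g x k <= gnorm p n g x i).

Definition matvec (n : nat) (A : nat -> nat -> R) (x : nat -> R) : nat -> R :=
  fun i => rsum (seq 0 n) (fun j => A i j * x j).

Definition norm2sq (k : nat) (y : nat -> R) : R := rsum (seq 0 k) (fun i => y i ^ 2).
Definition norm2 (k : nat) (y : nat -> R) : R := sqrt (norm2sq k y).

Definition grec_vals (p q : R) (m n r : nat) (g : nat -> nat) (A : nat -> nat -> R)
    (S N : nat) (v : R) : Prop :=
  exists (x : nat -> R) (J T : list nat),
    (exists j, (j < n)%nat /\ x j <> 0) /\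
    NoDup J /\ (forall i, In i J -> (i < r)%nat) /\ (length J <= S)%nat /\
    gpq p q n g x (compl r J) <= gpq p q n g x J /\
    is_topN p n r g x J N T /\
    v = norm2 m (matvec n A x) / gpq p 2 n g x (J ++ T).

Definition is_glb (E : R -> Prop) (l : R) : Prop :=
  (forall v, E v -> l <= v) /\ (forall l', (forall v, E v -> l' <= v) -> l' <= l).

Definition is_phi (p q : R) (m n r : nat) (g : nat -> nat) (A : nat -> nat -> R)
    (S N : nat) (phi : R) : Prop :=
  is_glb (grec_vals p q m n r g A S N) phi.

Definition num_nonzero_groups (p : R) (n r : nat) (g : nat -> nat) (x : nat -> R) : nat :=
  length (filter (fun i => if Req_EM_T (gnorm p n g x i) 0 then false else true) (seq 0 r)).

Definition vsub (x y : nat -> R) : nat -> R := fun j => x j - y j.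

(* Main.v *)
Require Import Defs.
From Stdlib Require Import Reals List Arith Lra Lia Psatz Permutation Sorting.Sorted Classical.
Import ListNotations.
Open Scope R_scope.


Lemma rpow_ge0 x y : 0 <= rpow x y.
Proof. unfold rpow, Rpower. destruct (Rlt_dec 0 x); [left; apply exp_pos | lra]. Qed.

Lemma rpow_pos x y : 0 < x -> 0 < rpow x y.
Proof. intro H. unfold rpow, Rpower. destruct (Rlt_dec 0 x); [apply exp_pos | lra]. Qed.

Lemma rpow_E x y : 0 < x -> rpow x y = Rpower x y.
Proof. intro H. unfold rpow. destruct (Rlt_dec 0 x); [reflexivity | lra]. Qed.

Lemma rpow_0 x y : x <= 0 -> rpow x y = 0.
Proof. intro H. unfold rpow. destruct (Rlt_dec 0 x); [lra | reflexivity]. Qed.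

Lemma Rpower_pos x y : 0 < Rpower x y.
Proof. unfold Rpower; apply exp_pos. Qed.

Lemma rpow_mult x y z : 0 <= x -> rpow (rpow x y) z = rpow x (y * z).
Proof.
  intro H. destruct (Req_dec x 0) as [->|Hx].
  - rewrite (rpow_0 0 y) by lra. rewrite !rpow_0 by lra. reflexivity.
  - assert (0 < x) by lra. rewrite (rpow_E x y) by lra.
    rewrite rpow_E by apply Rpower_pos. rewrite rpow_E by lra. apply Rpower_mult.
Qed.

Lemma rpow_1 x : 0 <= x -> rpow x 1 = x.
Proof.
  intro H. destruct (Req_dec x 0) as [->|Hx]. apply rpow_0; lra.
  rewrite rpow_E by lra. apply Rpower_1; lra.
Qed.

Lemma rpow_mul_distr x z y : 0 <= x -> 0 <= z -> rpow (x * z) y = rpow x y * rpow z y.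
Proof.
  intros Hx Hz. destruct (Req_dec x 0) as [->|Hx0].
  { rewrite Rmult_0_l, !(rpow_0 0) by lra. ring. }
  destruct (Req_dec z 0) as [->|Hz0].
  { rewrite Rmult_0_r, !(rpow_0 0) by lra. ring. }
  rewrite !rpow_E by nra. symmetry. apply Rpower_mult_distr; lra.
Qed.

Lemma rpow_inv x y : 0 < x -> rpow (/ x) y = / rpow x y.
Proof.
  intro H. rewrite !rpow_E; try lra. 2: apply Rinv_0_lt_compat; lra.
  unfold Rpower. rewrite ln_Rinv by lra. rewrite <- exp_Ropp. f_equal. ring.
Qed.

Lemma rpow_le x z y : 0 <= y -> 0 <= x <= z -> rpow x y <= rpow z y.
Proof.
  intros Hy Hxz. destruct (Req_dec x 0) as [->|Hx0].
  { rewrite rpow_0 by lra. apply rpow_ge0. }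
  rewrite !rpow_E by lra. apply Rle_Rpower_l; lra.
Qed.

Lemma rpow_plus x y z : 0 <= x -> rpow x (y + z) = rpow x y * rpow x z.
Proof.
  intro H. destruct (Req_dec x 0) as [->|Hx0].
  { rewrite !rpow_0 by lra. ring. }
  rewrite !rpow_E by lra. apply Rpower_plus.
Qed.

Lemma rpow_2 x : 0 <= x -> rpow x 2 = x ^ 2.
Proof.
  intro H. destruct (Req_dec x 0) as [->|Hx0].
  { rewrite rpow_0 by lra. ring. }
  rewrite rpow_E by lra. replace 2 with (INR 2) by (simpl; ring).
  apply Rpower_pow; lra.
Qed.

Lemma rpow_sqrt x : 0 <= x -> rpow x (/ 2) = sqrt x.
Proof.
  intro H. destruct (Req_dec x 0) as [->|Hx0].
  { rewrite rpow_0 by lra. now rewrite sqrt_0. }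
  rewrite rpow_E by lra. apply Rpower_sqrt; lra.
Qed.

Lemma rpow_eq0 x y : 0 <= x -> rpow x y = 0 -> x = 0.
Proof.
  intros H E. destruct (Req_dec x 0) as [->|Hx0]; auto.
  pose proof (rpow_pos x y). lra.
Qed.

Lemma rpow_inv_le a b p : 0 < p -> 0 <= a -> 0 <= b -> rpow a p <= rpow b p -> a <= b.
Proof.
  intros Hp Ha Hb H.
  assert (H2 : rpow (rpow a p) (/p) <= rpow (rpow b p) (/p)).
  { apply rpow_le. left; apply Rinv_0_lt_compat; lra. split; [apply rpow_ge0|exact H]. }
  rewrite !rpow_mult in H2 by lra. rewrite Rinv_r in H2 by lra.
  rewrite !rpow_1 in H2 by lra. exact H2.
Qed.

Lemma tangent c u p : 0 < c -> 0 < u -> 1 <= p ->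
  Rpower c p + p * Rpower c (p - 1) * (u - c) <= Rpower u p.
Proof.
  intros Hc Hu Hp.
  destruct (Rtotal_order c u) as [Hlt|[Heq|Hgt]].
  - destruct (MVT_cor2 (fun x => Rpower x p) (fun x => p * Rpower x (p - 1)) c u Hlt)
      as [xi [Exi Hxi]].
    { intros x Hx. apply derivable_pt_lim_power. lra. }
    assert (Rpower c (p - 1) <= Rpower xi (p - 1)) by (apply Rle_Rpower_l; lra).
    cbv beta in Exi.
    assert (p * Rpower c (p - 1) * (u - c) <= p * Rpower xi (p - 1) * (u - c)).
    { apply Rmult_le_compat_r; [lra|]. apply Rmult_le_compat_l; lra. }
    lra.
  - subst. lra.
  - destruct (MVT_cor2 (fun x => Rpower x p) (fun x => p * Rpower x (p - 1)) u c Hgt)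
      as [xi [Exi Hxi]].
    { intros x Hx. apply derivable_pt_lim_power. lra. }
    assert (Rpower xi (p - 1) <= Rpower c (p - 1)) by (apply Rle_Rpower_l; lra).
    cbv beta in Exi.
    assert (p * Rpower xi (p - 1) * (c - u) <= p * Rpower c (p - 1) * (c - u)).
    { apply Rmult_le_compat_r; [lra|]. apply Rmult_le_compat_l; lra. }
    lra.
Qed.

Lemma tangent0 c u p : 0 < c -> 0 <= u -> 1 <= p ->
  Rpower c p + p * Rpower c (p - 1) * (u - c) <= rpow u p.
Proof.
  intros Hc Hu Hp. destruct (Req_dec u 0) as [->|Hu0].
  - rewrite rpow_0 by lra.
    assert (E : Rpower c (p - 1) * c = Rpower c p).
    { rewrite <- (Rpower_1 c) at 2 by lra. rewrite <- Rpower_plus. f_equal; ring. }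
    pose proof (Rpower_pos c p). nra.
  - rewrite rpow_E by lra. apply tangent; lra.
Qed.

Lemma rpow_convex t u w p : 0 <= t <= 1 -> 0 <= u -> 0 <= w -> 1 <= p ->
  rpow (t * u + (1 - t) * w) p <= t * rpow u p + (1 - t) * rpow w p.
Proof.
  intros Ht Hu Hw Hp. set (c := t * u + (1 - t) * w).
  assert (Hc : 0 <= c) by (unfold c; nra).
  destruct (Req_dec c 0) as [E|Hc0].
  { rewrite E, rpow_0 by lra. pose proof (rpow_ge0 u p). pose proof (rpow_ge0 w p). nra. }
  rewrite rpow_E by lra.
  pose proof (tangent0 c u p ltac:(lra) Hu Hp).
  pose proof (tangent0 c w p ltac:(lra) Hw Hp).
  assert (t * (u - c) + (1 - t) * (w - c) = 0) by (unfold c; ring).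
  set (D := p * Rpower c (p - 1)) in *.
  assert (t * (Rpower c p + D * (u - c)) + (1 - t) * (Rpower c p + D * (w - c))
          <= t * rpow u p + (1 - t) * rpow w p) by nra.
  nra.
Qed.

Lemma rsum_nil f : rsum [] f = 0. Proof. reflexivity. Qed.
Lemma rsum_cons a l f : rsum (a :: l) f = f a + rsum l f. Proof. reflexivity. Qed.

Lemma rsum_app l1 l2 f : rsum (l1 ++ l2) f = rsum l1 f + rsum l2 f.
Proof. induction l1; simpl; [ring|]. unfold rsum in *; simpl. rewrite IHl1. ring. Qed.

Lemma rsum_ext l f h : (forall i, In i l -> f i = h i) -> rsum l f = rsum l h.
Proof.
  induction l; intro H; simpl; auto. unfold rsum in *; simpl.
  rewrite H by (left; auto). rewrite IHl; auto. intros; apply H; right; auto.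
Qed.

Lemma rsum_le l f h : (forall i, In i l -> f i <= h i) -> rsum l f <= rsum l h.
Proof.
  induction l; intro H; simpl; [lra|]. unfold rsum in *; simpl.
  pose proof (H a (or_introl eq_refl)).
  assert (fold_right (fun i acc => f i + acc) 0 l <= fold_right (fun i acc => h i + acc) 0 l)
    by (apply IHl; intros; apply H; right; auto). lra.
Qed.

Lemma rsum_ge0 l f : (forall i, In i l -> 0 <= f i) -> 0 <= rsum l f.
Proof.
  induction l; intro H; [unfold rsum; simpl; lra|]. rewrite rsum_cons.
  pose proof (H a (or_introl eq_refl)). pose proof (IHl (fun j Hj => H j (or_intror Hj))). lra.
Qed.

Lemma rsum_lin l a b f h : rsum l (fun i => a * f i + b * h i) = a * rsum l f + b * rsum l h.
Proof. induction l; unfold rsum in *; simpl; [ring|]. rewrite IHl. ring. Qed.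

Lemma rsum_plus l f h : rsum l (fun i => f i + h i) = rsum l f + rsum l h.
Proof. induction l; unfold rsum in *; simpl; [ring|]. rewrite IHl. ring. Qed.

Lemma rsum_minus l f h : rsum l (fun i => f i - h i) = rsum l f - rsum l h.
Proof. induction l; unfold rsum in *; simpl; [ring|]. rewrite IHl. ring. Qed.

Lemma rsum_scal l a f : rsum l (fun i => a * f i) = a * rsum l f.
Proof. induction l; unfold rsum in *; simpl; [ring|]. rewrite IHl. ring. Qed.

Lemma rsum_zero l f : (forall i, In i l -> f i = 0) -> rsum l f = 0.
Proof.
  induction l; intro H; [reflexivity|]. rewrite rsum_cons.
  rewrite (H a (or_introl eq_refl)), (IHl (fun j Hj => H j (or_intror Hj))). ring.
Qed.

Lemma rsum_perm l1 l2 f : Permutation l1 l2 -> rsum l1 f = rsum l2 f.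
Proof. induction 1; unfold rsum in *; simpl; try lra. Qed.

Lemma rsum_filter_split (P : nat -> bool) l f :
  rsum l f = rsum (filter P l) f + rsum (filter (fun x => negb (P x)) l) f.
Proof. induction l; simpl; [unfold rsum; simpl; ring|].
  destruct (P a); simpl; unfold rsum in *; simpl; rewrite IHl; ring. Qed.

Lemma term_le_sum l f i : (forall j, In j l -> 0 <= f j) -> In i l -> f i <= rsum l f.
Proof.
  induction l; intros H Hi; [destruct Hi|]. rewrite rsum_cons. destruct Hi as [<-|Hi].
  - pose proof (rsum_ge0 l f (fun j Hj => H j (or_intror Hj))). lra.
  - pose proof (H a (or_introl eq_refl)). pose proof (IHl (fun j Hj => H j (or_intror Hj)) Hi). lra.
Qed.

Lemma rsum_length_le l f a : (forall i, In i l -> a <= f i) -> INR (length l) * a <= rsum l f.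
Proof.
  induction l; intro H; simpl length; [unfold rsum; simpl; lra|]. rewrite rsum_cons.
  pose proof (H a0 (or_introl eq_refl)). pose proof (IHl (fun j Hj => H j (or_intror Hj))).
  destruct (length l); simpl in *; lra.
Qed.

Lemma cauchy_schwarz l f : (rsum l f) ^ 2 <= INR (length l) * rsum l (fun i => f i ^ 2).
Proof.
  induction l; simpl length; [unfold rsum; simpl; lra|].
  rewrite !rsum_cons, S_INR. destruct l as [|b l'].
  - unfold rsum; simpl. lra.
  - set (n := INR (length (b :: l'))) in *.
    assert (Hn : 0 < n) by (unfold n; simpl length; rewrite S_INR; pose proof (pos_INR (length l')); lra).
    set (L := rsum (b :: l') f) in *. set (Q := rsum (b :: l') (fun i => f i ^ 2)) in *.
    assert (0 <= (n * f a - L) ^ 2) by apply pow2_ge_0.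
    assert (n * (2 * f a * L) <= n * (n * f a ^ 2 + Q)) by nra.
    assert (2 * f a * L <= n * f a ^ 2 + Q).
    { apply Rmult_le_reg_l with n; lra. }
    nra.
Qed.

Definition G (p : R) (L : list nat) (al : nat -> R) : R :=
  rpow (rsum L (fun j => rpow (al j) p)) (/ p).

Lemma G_ge0 p L al : 0 <= G p L al.
Proof. apply rpow_ge0. Qed.

Lemma S_ge0 p L al : 0 <= rsum L (fun j => rpow (al j) p).
Proof. apply rsum_ge0; intros; apply rpow_ge0. Qed.

Lemma G_pow p L al : 0 < p -> rpow (G p L al) p = rsum L (fun j => rpow (al j) p).
Proof.
  intro Hp. unfold G. rewrite rpow_mult by apply S_ge0. rewrite Rinv_l by lra.
  apply rpow_1, S_ge0.
Qed.

Lemma G_ext p L al be : (forall j, In j L -> al j = be j) -> G p L al = G p L be.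
Proof. intro H. unfold G. f_equal. apply rsum_ext. intros; rewrite H; auto. Qed.

Lemma G_mono p L al be : 0 < p -> (forall j, In j L -> 0 <= al j <= be j) -> G p L al <= G p L be.
Proof.
  intros Hp H. unfold G. apply rpow_le. left; apply Rinv_0_lt_compat; lra.
  split. apply S_ge0. apply rsum_le. intros j Hj. apply rpow_le; [lra|]. auto.
Qed.

Lemma G_zero p L al : 0 < p -> (forall j, In j L -> 0 <= al j) -> G p L al = 0 ->
  forall j, In j L -> al j = 0.
Proof.
  intros Hp Hal H0 j Hj. unfold G in H0. apply rpow_eq0 in H0; [|apply S_ge0].
  assert (rpow (al j) p <= 0).
  { rewrite <- H0. apply (term_le_sum L (fun j => rpow (al j) p)); auto. intros; apply rpow_ge0. }
  pose proof (rpow_ge0 (al j) p).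
  apply (rpow_eq0 _ p); auto. lra.
Qed.

Lemma G_mink p L al be : 1 <= p -> (forall j, In j L -> 0 <= al j) -> (forall j, In j L -> 0 <= be j) ->
  G p L (fun j => al j + be j) <= G p L al + G p L be.
Proof.
  intros Hp Ha Hb. set (A := G p L al). set (B := G p L be).
  assert (HA : 0 <= A) by apply G_ge0. assert (HB : 0 <= B) by apply G_ge0.
  destruct (Req_dec A 0) as [A0|A0].
  { pose proof (G_zero p L al ltac:(lra) Ha A0).
    rewrite (G_ext p L _ be). fold B. lra. intros j Hj. rewrite H by auto. ring. }
  destruct (Req_dec B 0) as [B0|B0].
  { pose proof (G_zero p L be ltac:(lra) Hb B0).
    rewrite (G_ext p L _ al). fold A. lra. intros j Hj. rewrite H by auto. ring. }
  assert (HApos : 0 < A) by lra. assert (HBpos : 0 < B) by lra.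
  set (t := A / (A + B)).
  assert (Ht : 0 <= t <= 1).
  { unfold t. split. unfold Rdiv; apply Rmult_le_pos; [lra|]; left; apply Rinv_0_lt_compat; lra.
    apply Rmult_le_reg_r with (A + B); [lra|]. unfold Rdiv. rewrite Rmult_assoc, Rinv_l by lra. lra. }
  assert (Hpt : forall j, In j L ->
    rpow (al j + be j) p <= rpow (A + B) p *
       (t / rpow A p * rpow (al j) p + (1 - t) / rpow B p * rpow (be j) p)).
  { intros j Hj. pose proof (Ha j Hj). pose proof (Hb j Hj).
    assert (E : al j + be j = (A + B) * (t * (al j * / A) + (1 - t) * (be j * / B))).
    { unfold t. field. lra. }
    rewrite E. rewrite rpow_mul_distr; [| lra |].
    2:{ assert (0 <= t * (al j * / A)) by (apply Rmult_le_pos; [lra|]; apply Rmult_le_pos; [lra|]; left; apply Rinv_0_lt_compat; lra).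
        assert (0 <= (1 - t) * (be j * / B)) by (apply Rmult_le_pos; [lra|]; apply Rmult_le_pos; [lra|]; left; apply Rinv_0_lt_compat; lra).
        lra. }
    apply Rmult_le_compat_l. apply rpow_ge0.
    assert (Hu : 0 <= al j * / A) by (apply Rmult_le_pos; [lra|]; left; apply Rinv_0_lt_compat; lra).
    assert (Hw : 0 <= be j * / B) by (apply Rmult_le_pos; [lra|]; left; apply Rinv_0_lt_compat; lra).
    eapply Rle_trans. apply rpow_convex; auto.
    rewrite !rpow_mul_distr by (auto; left; apply Rinv_0_lt_compat; lra).
    rewrite !rpow_inv by lra. right. unfold Rdiv. ring. }
  assert (Hsum : rsum L (fun j => rpow (al j + be j) p) <= rpow (A + B) p).
  { eapply Rle_trans. apply rsum_le. exact Hpt.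
    rewrite rsum_scal, rsum_lin.
    rewrite <- (G_pow p L al), <- (G_pow p L be) by lra. fold A B.
    assert (0 < rpow A p) by (apply rpow_pos; lra).
    assert (0 < rpow B p) by (apply rpow_pos; lra).
    right. field; lra. }
  unfold G at 1. eapply Rle_trans.
  apply rpow_le. left; apply Rinv_0_lt_compat; lra. split. apply S_ge0. exact Hsum.
  rewrite rpow_mult by lra. rewrite Rinv_r by lra. rewrite rpow_1 by lra. lra.
Qed.

Lemma G_l2 p L al : 1 <= p <= 2 -> (forall j, In j L -> 0 <= al j) ->
  rsum L (fun j => al j ^ 2) <= (G p L al) ^ 2.
Proof.
  intros Hp Ha. set (s := rsum L (fun j => rpow (al j) p)).
  assert (Hs : 0 <= s) by apply S_ge0.
  assert (Hle : forall j, In j L -> rpow (al j) p <= s).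
  { intros j Hj. apply (term_le_sum L (fun j => rpow (al j) p)); auto. intros; apply rpow_ge0. }
  destruct (Req_dec s 0) as [s0|s0].
  { rewrite rsum_zero. apply pow2_ge_0. intros j Hj. pose proof (Hle j Hj). pose proof (rpow_ge0 (al j) p).
    rewrite (rpow_eq0 (al j) p) by (auto; lra). ring. }
  set (M := G p L al).
  assert (HM : rpow M p = s) by (apply G_pow; lra).
  assert (HMpos : 0 < M).
  { pose proof (G_ge0 p L al). fold M in H. destruct (Req_dec M 0) as [M0|]; [|lra].
    rewrite M0, rpow_0 in HM by lra. lra. }
  assert (Hpt : forall j, In j L -> al j ^ 2 <= rpow (al j) p * rpow M (2 - p)).
  { intros j Hj. pose proof (Ha j Hj).
    assert (al j <= M).
    { apply (rpow_inv_le _ _ p); try lra. rewrite HM; auto. }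
    rewrite <- rpow_2 by lra. replace 2 with (p + (2 - p)) at 1 by ring.
    rewrite rpow_plus by lra. apply Rmult_le_compat_l. apply rpow_ge0.
    destruct (Req_dec p 2) as [->|].
    - replace (2 - 2) with 0 by ring. destruct (Req_dec (al j) 0) as [->|].
      + rewrite rpow_0 by lra. apply rpow_ge0.
      + rewrite !rpow_E by lra. rewrite !Rpower_O by lra. lra.
    - apply rpow_le; lra. }
  eapply Rle_trans. apply rsum_le. exact Hpt.
  rewrite (rsum_ext L _ (fun j => rpow M (2 - p) * rpow (al j) p)) by (intros; ring).
  rewrite rsum_scal. fold s. rewrite <- HM, <- rpow_plus by lra.
  replace (2 - p + p) with 2 by ring. rewrite rpow_2 by lra. lra.
Qed.

Lemma indicator_sum k c r : (k < r)%nat ->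
  rsum (seq 0 r) (fun i => if Nat.eqb k i then c else 0) = c.
Proof.
  intro H. replace r with (k + S (r - k - 1))%nat by lia.
  rewrite seq_app. rewrite rsum_app. simpl seq. rewrite rsum_cons.
  rewrite Nat.eqb_refl.
  rewrite !rsum_zero. ring.
  - intros i Hi. apply in_seq in Hi. destruct (Nat.eqb_spec k i); [lia|auto].
  - intros i Hi. apply in_seq in Hi. destruct (Nat.eqb_spec k i); [lia|auto].
Qed.

Lemma group_decomp (g : nat -> nat) r l f : (forall j, In j l -> (g j < r)%nat) ->
  rsum l f = rsum (seq 0 r) (fun i => rsum (filter (fun j => Nat.eqb (g j) i) l) f).
Proof.
  induction l as [|a l IH]; intro H.
  - symmetry. apply rsum_zero. intros; reflexivity.
  - rewrite (rsum_ext (seq 0 r) (fun i => rsum (filter (fun j => Nat.eqb (g j) i) (a :: l)) f) (fun i => (if Nat.eqb (g a) i then f a else 0) +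
                                  rsum (filter (fun j => Nat.eqb (g j) i) l) f)).
    + rewrite rsum_plus. rewrite (indicator_sum (g a) (f a) r) by (apply H; left; auto).
      rewrite rsum_cons, IH; auto. intros; apply H; right; auto.
    + intros i _. simpl. destruct (Nat.eqb (g a) i); [rewrite rsum_cons|]; ring.
Qed.

Fixpoint ins (f : nat -> R) (x : nat) (l : list nat) : list nat :=
  match l with
  | [] => [x]
  | y :: l' => if Rle_dec (f y) (f x) then x :: l else y :: ins f x l'
  end.

Fixpoint isort (f : nat -> R) (l : list nat) : list nat :=
  match l with [] => [] | x :: l' => ins f x (isort f l') end.

Lemma ins_perm f x l : Permutation (x :: l) (ins f x l).
Proof.
  induction l as [|y l IH]; simpl; auto.
  destruct (Rle_dec (f y) (f x)); auto.
  eapply perm_trans. apply perm_swap. constructor. auto.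
Qed.

Lemma isort_perm f l : Permutation l (isort f l).
Proof.
  induction l; simpl; auto. eapply perm_trans. 2: apply ins_perm. constructor; auto.
Qed.

Definition desc (f : nat -> R) := fun a b => f b <= f a.

Lemma ins_sorted f x l : StronglySorted (desc f) l -> StronglySorted (desc f) (ins f x l).
Proof.
  induction l as [|y l IH]; intro H; simpl.
  - constructor; constructor.
  - inversion H; subst. destruct (Rle_dec (f y) (f x)).
    + constructor; auto. constructor. unfold desc; auto.
      apply Forall_forall. intros z Hz. unfold desc.
      rewrite Forall_forall in H3. specialize (H3 z Hz). unfold desc in H3. lra.
    + constructor; auto. apply Forall_forall. intros z Hz.
      apply (Permutation_in _ (Permutation_sym (ins_perm f x l))) in Hz.
      destruct Hz as [<-|Hz]. unfold desc; lra.
      rewrite Forall_forall in H3. auto.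
Qed.

Lemma isort_sorted f l : StronglySorted (desc f) (isort f l).
Proof. induction l; simpl. constructor. apply ins_sorted; auto. Qed.

Lemma ss_app {A} (R0 : A -> A -> Prop) l1 l2 a b :
  StronglySorted R0 (l1 ++ l2) -> In a l1 -> In b l2 -> R0 a b.
Proof.
  induction l1; intros H Ha Hb; [destruct Ha|].
  simpl in H. inversion H; subst. destruct Ha as [<-|Ha].
  - rewrite Forall_forall in H3. apply H3. apply in_or_app; auto.
  - auto.
Qed.

Lemma topN_exists p n r g x J N :
  exists T rest, is_topN p n r g x J N T /\ Permutation (compl r J) (T ++ rest) /\
    (forall i k, In i T -> In k rest -> gnorm p n g x k <= gnorm p n g x i) /\
    ((length (compl r J) <= N)%nat -> rest = []) /\
    ((N <= length (compl r J))%nat -> length T = N).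
Proof.
  set (f := gnorm p n g x). set (C := compl r J). set (s := isort f C).
  assert (HP : Permutation C s) by apply isort_perm.
  assert (HL : length C = length s) by (apply Permutation_length; exact HP).
  assert (HND : NoDup C) by (apply NoDup_filter, seq_NoDup).
  assert (HNDs : NoDup s) by (eapply Permutation_NoDup; eauto).
  assert (Hss : StronglySorted (desc f) s) by apply isort_sorted.
  exists (firstn N s), (skipn N s).
  rewrite <- (firstn_skipn N s) in HNDs, Hss, HP.
  assert (Hdom : forall i k, In i (firstn N s) -> In k (skipn N s) -> f k <= f i).
  { intros i k Hi Hk. exact (ss_app _ _ _ _ _ Hss Hi Hk). }
  split; [|split; [|split; [|split]]]; auto.
  - split; [|split; [|split]].
    + eapply NoDup_app_remove_r; eauto.
    + intros i Hi. apply (Permutation_in _ (Permutation_sym HP)). apply in_or_app; auto.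
    + rewrite length_firstn. change (compl r J) with C. rewrite HL. reflexivity.
    + intros i k Hi Hk Hnk. apply (Permutation_in _ HP) in Hk. apply in_app_or in Hk.
      destruct Hk; [contradiction|]. auto.
  - intro HN. apply skipn_all2. change (compl r J) with C in HN. lia.
  - intro HN. rewrite length_firstn. change (compl r J) with C in HN. lia.
Qed.

Lemma gnorm_G p n g x i :
  gnorm p n g x i = G p (filter (fun j => Nat.eqb (g j) i) (seq 0 n)) (fun j => Rabs (x j)).
Proof. reflexivity. Qed.

Lemma gnorm_ge0 p n g x i : 0 <= gnorm p n g x i.
Proof. apply rpow_ge0. Qed.

Lemma half_inv : 1 / 2 = / 2. Proof. field. Qed.

Lemma gpq_half p n g x L :
  gpq p (1/2) n g x L = (rsum L (fun i => sqrt (gnorm p n g x i))) ^ 2.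
Proof.
  unfold gpq. rewrite (rsum_ext L _ (fun i => sqrt (gnorm p n g x i))).
  - replace (/ (1/2)) with 2 by field. apply rpow_2. apply rsum_ge0; intros; apply sqrt_pos.
  - intros i _. rewrite half_inv. apply rpow_sqrt, gnorm_ge0.
Qed.

Lemma gpq_two p n g x L :
  gpq p 2 n g x L = sqrt (rsum L (fun i => (gnorm p n g x i) ^ 2)).
Proof.
  unfold gpq. rewrite (rsum_ext L _ (fun i => (gnorm p n g x i) ^ 2)).
  - apply rpow_sqrt. apply rsum_ge0; intros; apply pow2_ge_0.
  - intros i _. apply rpow_2, gnorm_ge0.
Qed.

Lemma obj_eq p n r g x :
  rpow (gpq_full p (1/2) n r g x) (1/2) = rsum (seq 0 r) (fun i => sqrt (gnorm p n g x i)).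
Proof.
  unfold gpq_full. rewrite gpq_half, half_inv, rpow_sqrt by apply pow2_ge_0.
  apply sqrt_pow2. apply rsum_ge0; intros; apply sqrt_pos.
Qed.

Lemma matvec_sub n A x y i : matvec n A (vsub x y) i = matvec n A x i - matvec n A y i.
Proof.
  unfold matvec, vsub. rewrite <- rsum_minus. apply rsum_ext. intros; ring.
Qed.

Lemma sqrt_sub_add a b : 0 <= a -> 0 <= b -> sqrt (a + b) <= sqrt a + sqrt b.
Proof.
  intros Ha Hb. rewrite <- (sqrt_pow2 (sqrt a + sqrt b)) by (pose proof (sqrt_pos a); pose proof (sqrt_pos b); lra).
  apply sqrt_le_1_alt. pose proof (sqrt_sqrt a Ha). pose proof (sqrt_sqrt b Hb).
  pose proof (sqrt_pos a). pose proof (sqrt_pos b). nra.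
Qed.

Lemma cube_mono x y : 0 <= x -> x < y -> x ^ 3 < y ^ 3.
Proof.
  intros. assert (0 < y) by lra.
  assert (x * x <= y * y) by (apply Rmult_le_compat; lra).
  assert (x * x * x <= y * y * x) by (apply Rmult_le_compat_r; lra).
  assert (y * y * x < y * y * y) by (apply Rmult_lt_compat_l; [apply Rmult_lt_0_compat|]; lra).
  simpl. lra.
Qed.

Lemma Rpower_pow3 x y : 0 < x -> (Rpower x y) ^ 3 = Rpower x (y * 3).
Proof.
  intro H. rewrite <- Rpower_pow by apply Rpower_pos. rewrite Rpower_mult. f_equal. simpl. ring.
Qed.

Theorem corollary2p2
  (m n r : nat) (g : nat -> nat) (p : R) (A : nat -> nat -> R)
  (xbar : nat -> R) (S : nat) (phi lambda : R) (xstar : nat -> R) :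
  is_group_partition n r g ->
  1 <= p <= 2 ->
  (1 <= S)%nat ->
  num_nonzero_groups p n r g xbar = S ->
  is_phi p (1/2) m n r g A S S phi ->
  0 < phi ->
  0 < lambda ->
  (forall x : nat -> R,
     norm2sq m (vsub (matvec n A xstar) (matvec n A xbar))
       + lambda * rpow (gpq_full p (1/2) n r g xstar) (1/2)
     <= norm2sq m (vsub (matvec n A x) (matvec n A xbar))
       + lambda * rpow (gpq_full p (1/2) n r g x) (1/2)) ->
  norm2sq n (vsub xstar xbar)
    <= 2 * Rpower lambda (4/3) * INR S / Rpower phi (8/3).
Proof.
  intros Hpart Hp HS Hnz Hphi Hphipos Hlam Hopt.
  set (h := vsub xstar xbar).
  set (c := fun i => gnorm p n g h i).
  set (d := fun i => sqrt (c i)).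
  set (P := fun i => if Req_EM_T (gnorm p n g xbar i) 0 then false else true).
  set (J := filter P (seq 0 r)).
  assert (HJlen : length J = S) by exact Hnz.
  assert (HPJ : forall i, In i (seq 0 r) -> existsb (Nat.eqb i) J = P i).
  { intros i Hi. destruct (existsb (Nat.eqb i) J) eqn:E.
    - apply existsb_exists in E. destruct E as [k [Hk Ek]]. apply Nat.eqb_eq in Ek. subst k.
      apply filter_In in Hk. symmetry; apply Hk.
    - destruct (P i) eqn:EP; auto. exfalso.
      assert (In i J) by (apply filter_In; auto).
      assert (existsb (Nat.eqb i) J = true) by (apply existsb_exists; exists i; split; auto; apply Nat.eqb_refl).
      congruence. }
  assert (HJc : compl r J = filter (fun i => negb (P i)) (seq 0 r)).
  { unfold compl. apply filter_ext_in. intros i Hi. rewrite HPJ; auto. }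
  assert (Hsplit : forall F, rsum (seq 0 r) F = rsum J F + rsum (compl r J) F).
  { intro F. rewrite HJc. apply rsum_filter_split. }
  assert (HJnd : NoDup J) by (apply NoDup_filter, seq_NoDup).
  assert (HJr : forall i, In i J -> (i < r)%nat).
  { intros i Hi. apply filter_In in Hi. destruct Hi as [Hi _]. apply in_seq in Hi. lia. }
  assert (Hcz : forall i, In i (compl r J) -> gnorm p n g xbar i = 0).
  { intros i Hi. rewrite HJc in Hi. apply filter_In in Hi. destruct Hi as [_ Hi].
    unfold P in Hi. destruct (Req_EM_T (gnorm p n g xbar i) 0); auto. discriminate. }
  assert (Hp0 : 0 < p) by lra.
  assert (Hbc : forall i, In i (compl r J) -> gnorm p n g xstar i = c i).
  { intros i Hi. pose proof (Hcz i Hi) as Z. rewrite gnorm_G in Z.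
    pose proof (G_zero _ _ _ Hp0 (fun j _ => Rabs_pos (xbar j)) Z) as Z'.
    unfold c. rewrite !gnorm_G. apply G_ext. intros j Hj. unfold h, vsub.
    specialize (Z' j Hj). simpl in Z'. assert (xbar j = 0) by (destruct (Req_dec (xbar j) 0); auto; exfalso; apply Rabs_no_R0 in H; auto).
    rewrite H. f_equal; ring. }
  assert (Habc : forall i, gnorm p n g xbar i <= gnorm p n g xstar i + c i).
  { intro i. unfold c. rewrite !gnorm_G. eapply Rle_trans. 2: apply G_mink.
    - apply G_mono; auto. intros j Hj. split. apply Rabs_pos.
      unfold h, vsub. replace (xbar j) with (xstar j + - (xstar j - xbar j)) at 1 by ring.
      eapply Rle_trans. apply Rabs_triang. rewrite Rabs_Ropp. lra.
    - lra.
    - intros; apply Rabs_pos.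
    - intros; apply Rabs_pos. }
  assert (Hsq : forall i, sqrt (gnorm p n g xbar i) <= sqrt (gnorm p n g xstar i) + d i).
  { intro i. unfold d. eapply Rle_trans. apply sqrt_le_1_alt. apply Habc.
    apply sqrt_sub_add. apply gnorm_ge0. apply gnorm_ge0. }
  set (E := norm2sq m (vsub (matvec n A xstar) (matvec n A xbar))).
  set (U := rsum (compl r J) d). set (V := rsum J d).
  assert (HE0 : 0 <= E) by (apply rsum_ge0; intros; apply pow2_ge_0).
  assert (HU0 : 0 <= U) by (apply rsum_ge0; intros; apply sqrt_pos).
  assert (HV0 : 0 <= V) by (apply rsum_ge0; intros; apply sqrt_pos).
  assert (Hkey : E + lambda * U <= lambda * V).
  { pose proof (Hopt xbar) as H. fold E in H. rewrite !obj_eq in H.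
    rewrite !(Hsplit (fun i => sqrt (gnorm p n g _ i))) in H.
    assert (Z0 : norm2sq m (vsub (matvec n A xbar) (matvec n A xbar)) = 0).
    { apply rsum_zero. intros; unfold vsub; ring. }
    rewrite Z0 in H.
    rewrite (rsum_zero (compl r J) (fun i => sqrt (gnorm p n g xbar i))) in H
      by (intros i Hi; rewrite Hcz by auto; apply sqrt_0).
    rewrite (rsum_ext (compl r J) (fun i => sqrt (gnorm p n g xstar i)) d) in H
      by (intros i Hi; rewrite Hbc by auto; reflexivity).
    fold U in H.
    assert (rsum J (fun i => sqrt (gnorm p n g xbar i)) <=
            rsum J (fun i => sqrt (gnorm p n g xstar i)) + V).
    { unfold V. rewrite <- rsum_plus. apply rsum_le. intros; apply Hsq. }
    nra. }
  assert (HUV : U <= V) by nra.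
  assert (HEV : E <= lambda * V) by nra.

  set (Sr := INR S).
  assert (HSr : 0 < Sr) by (unfold Sr; apply lt_0_INR; lia).
  set (K := Rpower lambda (4/3) * Sr / Rpower phi (8/3)).
  assert (HK : 0 < K).
  { unfold K. pose proof (Rpower_pos lambda (4/3)). pose proof (Rpower_pos phi (8/3)).
    unfold Rdiv. apply Rmult_lt_0_compat. nra. apply Rinv_0_lt_compat; lra. }
  assert (Hgoal : 2 * Rpower lambda (4 / 3) * Sr / Rpower phi (8 / 3) = 2 * K)
    by (unfold K, Rdiv; ring).
  rewrite Hgoal.
  assert (Hcd : forall i, c i ^ 2 = d i ^ 4).
  { intro i. unfold d. replace 4%nat with (2 * 2)%nat by reflexivity. rewrite pow_mult.
    rewrite pow2_sqrt by apply gnorm_ge0. reflexivity. }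
  assert (Hd0 : forall i, 0 <= d i) by (intros; apply sqrt_pos).
  assert (Hhold : V ^ 4 <= Sr ^ 3 * rsum J (fun i => c i ^ 2)).
  { rewrite (rsum_ext J _ (fun i => (d i ^ 2) ^ 2)) by (intros; rewrite Hcd; ring).
    pose proof (cauchy_schwarz J d) as C1. pose proof (cauchy_schwarz J (fun i => d i ^ 2)) as C2.
    rewrite HJlen in C1, C2. fold V Sr in C1. fold Sr in C2.
    assert (0 <= rsum J (fun i => d i ^ 2)) by (apply rsum_ge0; intros; apply pow2_ge_0).
    assert (V ^ 4 = (V ^ 2) ^ 2) by ring.
    assert ((V ^ 2) ^ 2 <= (Sr * rsum J (fun i => d i ^ 2)) ^ 2)
      by (apply pow_incr; split; [apply pow2_ge_0|exact C1]).
    assert (Sr * (rsum J (fun i => d i ^ 2)) ^ 2 <= Sr * (Sr * rsum J (fun i => (d i ^ 2) ^ 2)))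
      by (apply Rmult_le_compat_l; lra).
    nra. }
  assert (Hl2 : norm2sq n h <= rsum (seq 0 r) (fun i => c i ^ 2)).
  { unfold norm2sq. rewrite (group_decomp g r).
    2:{ intros j Hj. apply in_seq in Hj. apply (proj1 Hpart). lia. }
    apply rsum_le. intros i _. unfold c. rewrite gnorm_G.
    rewrite (rsum_ext _ (fun j => h j ^ 2) (fun j => Rabs (h j) ^ 2)) by (intros; rewrite <- pow2_abs; reflexivity).
    apply G_l2; auto. intros; apply Rabs_pos. }
  destruct (classic (exists j, (j < n)%nat /\ h j <> 0)) as [Hnz0|Hz].
  2:{ assert (norm2sq n h = 0).
      { apply rsum_zero. intros j Hj. apply in_seq in Hj.
        destruct (Req_dec (h j) 0) as [->|Hne]; [ring|]. exfalso; apply Hz; exists j; split; [lia|auto]. }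
      lra. }
  destruct (topN_exists p n r g h J S) as [T [rest [HT [Hperm [Hdom [Hrest HTlen]]]]]].
  set (W := rsum (J ++ T) (fun i => c i ^ 2)).
  assert (HW0 : 0 <= W) by (apply rsum_ge0; intros; apply pow2_ge_0).
  assert (Hgrec : phi <= sqrt E / sqrt W).
  { destruct Hphi as [Hlow _]. apply Hlow.
    exists h, J, T. split; [exact Hnz0|]. split; [exact HJnd|]. split; [exact HJr|].
    split; [lia|]. split.
    - rewrite !gpq_half. change (U ^ 2 <= V ^ 2). apply pow_incr; lra.
    - split; [exact HT|]. unfold norm2. rewrite gpq_two. f_equal. f_equal.
      unfold E, norm2sq. apply rsum_ext. intros i _. unfold vsub at 1. rewrite <- matvec_sub. reflexivity. }
  assert (HWK : W <= K).
  { destruct (Req_dec W 0) as [W0|Wn0]; [lra|]. assert (HWp : 0 < W) by lra.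
    assert (Hsw : 0 < sqrt W) by (apply sqrt_lt_R0; lra).
    assert (H1 : phi * sqrt W <= sqrt E).
    { apply Rmult_le_reg_r with (/ sqrt W). apply Rinv_0_lt_compat; lra.
      rewrite Rmult_assoc, Rinv_r by lra. lra. }
    assert (H2 : phi ^ 2 * W <= E).
    { rewrite <- (sqrt_sqrt W), <- (sqrt_sqrt E) by lra.
      assert (0 <= phi * sqrt W) by nra.
      assert ((phi * sqrt W) ^ 2 <= sqrt E ^ 2) by (apply pow_incr; lra). simpl in *. nra. }
    assert (HJW : rsum J (fun i => c i ^ 2) <= W).
    { unfold W. rewrite rsum_app. assert (0 <= rsum T (fun i => c i ^ 2)) by (apply rsum_ge0; intros; apply pow2_ge_0). lra. }
    assert (H3 : (phi ^ 2 * W) ^ 4 <= (lambda * V) ^ 4).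
    { apply pow_incr. split. apply Rmult_le_pos; [apply pow2_ge_0|lra]. lra. }
    assert (H4 : phi ^ 8 * W ^ 4 <= lambda ^ 4 * (Sr ^ 3 * W)).
    { assert (lambda ^ 4 * V ^ 4 <= lambda ^ 4 * (Sr ^ 3 * W)).
      { apply Rmult_le_compat_l. apply pow_le; lra. assert (Sr ^ 3 * rsum J (fun i => c i ^ 2) <= Sr ^ 3 * W) by (apply Rmult_le_compat_l; [apply pow_le; lra| lra]). lra. }
      replace (phi ^ 8 * W ^ 4) with ((phi ^ 2 * W) ^ 4) by ring.
      replace (lambda ^ 4 * V ^ 4) with ((lambda * V) ^ 4) in H by ring. lra. }
    assert (H5 : phi ^ 8 * W ^ 3 <= lambda ^ 4 * Sr ^ 3).
    { apply Rmult_le_reg_r with W; [lra|]. replace (phi ^ 8 * W ^ 3 * W) with (phi ^ 8 * W ^ 4) by ring. lra. }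
    assert (Hl3 : (Rpower lambda (4/3)) ^ 3 = lambda ^ 4).
    { rewrite Rpower_pow3 by lra. replace (4/3*3) with (INR 4) by (simpl; field). apply Rpower_pow; lra. }
    assert (Hf3 : (Rpower phi (8/3)) ^ 3 = phi ^ 8).
    { rewrite Rpower_pow3 by lra. replace (8/3*3) with (INR 8) by (simpl; field). apply Rpower_pow; lra. }
    assert (HKf : K * Rpower phi (8/3) = Rpower lambda (4/3) * Sr).
    { unfold K. field. pose proof (Rpower_pos phi (8/3)). lra. }
    destruct (Rle_lt_dec W K) as [|HWK]; auto. exfalso.
    assert (Hfp : 0 < Rpower phi (8/3)) by apply Rpower_pos.
    assert (K * Rpower phi (8/3) < W * Rpower phi (8/3)) by (apply Rmult_lt_compat_r; lra).
    pose proof (cube_mono (K * Rpower phi (8/3)) (W * Rpower phi (8/3)) ltac:(nra) H).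
    rewrite HKf in H0. rewrite !Rpow_mult_distr in H0. rewrite Hl3, Hf3 in H0. nra. }
  assert (Hcomp : rsum (compl r J) (fun i => c i ^ 2) = rsum T (fun i => c i ^ 2) + rsum rest (fun i => c i ^ 2)).
  { rewrite (rsum_perm _ _ _ Hperm). apply rsum_app. }
  assert (HUd : U = rsum T d + rsum rest d).
  { unfold U. rewrite (rsum_perm _ _ _ Hperm). apply rsum_app. }
  assert (Htail : rsum rest (fun i => c i ^ 2) <= rsum J (fun i => c i ^ 2)).
  { destruct (Nat.le_gt_cases (length (compl r J)) S) as [Hle|Hgt].
    - rewrite (Hrest Hle). unfold rsum; simpl. apply rsum_ge0; intros; apply pow2_ge_0.
    - assert (HTS : length T = S) by (apply HTlen; lia).
      assert (Hk : forall k, In k rest -> d k <= V / Sr).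
      { intros k Hk. assert (INR (length T) * d k <= rsum T d).
        { apply rsum_length_le. intros i Hi. apply sqrt_le_1_alt. apply Hdom; auto. }
        rewrite HTS in H. fold Sr in H.
        assert (0 <= rsum rest d) by (apply rsum_ge0; auto).
        apply Rmult_le_reg_l with Sr; auto. unfold Rdiv. rewrite <- Rmult_assoc.
        rewrite (Rmult_comm Sr V), Rmult_assoc, Rinv_r by lra. lra. }
      assert (Hrd : rsum rest (fun i => c i ^ 2) <= (V / Sr) ^ 3 * rsum rest d).
      { rewrite <- rsum_scal. apply rsum_le. intros k Hkk. rewrite Hcd.
        specialize (Hk k Hkk). specialize (Hd0 k).
        assert (d k ^ 3 <= (V / Sr) ^ 3) by (apply pow_incr; lra).
        replace (d k ^ 4) with (d k ^ 3 * d k) by ring. apply Rmult_le_compat_r; lra. }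
      assert (Hrs : rsum rest d <= V) by (assert (0 <= rsum T d) by (apply rsum_ge0; auto); lra).
      assert (HV3 : 0 <= (V / Sr) ^ 3) by (apply pow_le; unfold Rdiv; apply Rmult_le_pos; [lra|left; apply Rinv_0_lt_compat; lra]).
      assert ((V / Sr) ^ 3 * rsum rest d <= (V / Sr) ^ 3 * V) by (apply Rmult_le_compat_l; lra).
      assert ((V / Sr) ^ 3 * V = V ^ 4 / Sr ^ 3) by (field; lra).
      assert (V ^ 4 / Sr ^ 3 <= rsum J (fun i => c i ^ 2)).
      { apply Rmult_le_reg_r with (Sr ^ 3). apply pow_lt; lra.
        unfold Rdiv. rewrite Rmult_assoc, Rinv_l by (apply pow_nonzero; lra). lra. }
      lra. }
  rewrite (Hsplit (fun i => c i ^ 2)) in Hl2. rewrite Hcomp in Hl2.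
  unfold W in HWK. rewrite rsum_app in HWK.
  assert (0 <= rsum T (fun i => c i ^ 2)) by (apply rsum_ge0; intros; apply pow2_ge_0). lra.
Qed.
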